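(* For every $\varepsilon>0$ there is a constant $C_\varepsilon$ such that for every $n\geq 2$ and every pair of disjoint sets $\mathcal{A},\mathcal{B}\subseteq\{0,1\}^n$, there is a first-order sentence over $\tau_{\mathsf{string}}$ with at most $(1+\varepsilon)\frac{n}{\log_2 n}+C_\varepsilon$ quantifiers that is true in $\mathbf{B}_w$ for all $w\in\mathcal{A}$ and false in $\mathbf{B}_{w'}$ for all $w'\in\mathcal{B}$.
   Context: Vocabulary $\tau_{\mathsf{string}}=\langle <, S;\ \mathsf{min},\mathsf{max}\rangle$ with $<$ binary, $S$ unary, $\mathsf{min},\mathsf{max}$ constants. A string $w=w_1\cdots w_n\in\{0,1\}^n$ ($n\geq 1$) is encoded by the structure $\mathbf{B}_w$ with universe $\{1,\dots,n\}$, $<$ the usual order, $S=\{i: w_i=1\}$, $\mathsf{min}=1$, $\mathsf{max}=n$. The number of quantifiers is the number of quantifier occurrences. *)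

(* Defs.v *)
From Stdlib Require Import Reals List Arith.
Open Scope R_scope.

Inductive term : Type :=
| TVar : nat -> term
| TMin : term
| TMax : term.

Inductive formula : Type :=
| FTrue : formula
| FFalse : formula
| FLt : term -> term -> formula
| FEq : term -> term -> formula
| FS : term -> formula
| FNot : formula -> formula
| FAnd : formula -> formula -> formula
| FOr : formula -> formula -> formula
| FImp : formula -> formula -> formula
| FEx : nat -> formula -> formula
| FAll : nat -> formula -> formula.

Fixpoint quant_count (f : formula) : nat :=
  match f with
  | FTrue | FFalse | FLt _ _ | FEq _ _ | FS _ => 0
  | FNot g => quant_count g
  | FAnd g h | FOr g h | FImp g h => quant_count g + quant_count h
  | FEx _ g | FAll _ g => S (quant_count g)
  end.

Definition term_has_var (x : nat) (t : term) : Prop :=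
  match t with TVar y => y = x | _ => False end.

Fixpoint occurs_free (x : nat) (f : formula) : Prop :=
  match f with
  | FTrue | FFalse => False
  | FLt s t | FEq s t => term_has_var x s \/ term_has_var x t
  | FS t => term_has_var x t
  | FNot g => occurs_free x g
  | FAnd g h | FOr g h | FImp g h => occurs_free x g \/ occurs_free x h
  | FEx y g | FAll y g => y <> x /\ occurs_free x g
  end.

Definition sentence (f : formula) : Prop := forall x, ~ occurs_free x f.

(* The structure B_w for w = w_1...w_n (w : list bool of length n):
   universe {1,...,n}, usual order, S = {i | w_i = 1}, min = 1, max = n. *)
Definition eval_term (w : list bool) (v : nat -> nat) (t : term) : nat :=
  match t with
  | TVar x => v x
  | TMin => 1%nat
  | TMax => length w
  end.

Definition in_S (w : list bool) (i : nat) : Prop := nth (i - 1) w false = true.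

Definition update (v : nat -> nat) (x a : nat) : nat -> nat :=
  fun y => if Nat.eqb y x then a else v y.

Fixpoint sat (w : list bool) (v : nat -> nat) (f : formula) : Prop :=
  match f with
  | FTrue => True
  | FFalse => False
  | FLt s t => (eval_term w v s < eval_term w v t)%nat
  | FEq s t => eval_term w v s = eval_term w v t
  | FS t => in_S w (eval_term w v t)
  | FNot g => ~ sat w v g
  | FAnd g h => sat w v g /\ sat w v h
  | FOr g h => sat w v g \/ sat w v h
  | FImp g h => sat w v g -> sat w v h
  | FEx x g => exists a, (1 <= a <= length w)%nat /\ sat w (update v x a) g
  | FAll x g => forall a, (1 <= a <= length w)%nat -> sat w (update v x a) g
  end.

(* Truth of a sentence in B_w (valuation irrelevant for sentences; we fix
   the default assignment to the element 1). *)
Definition holds (w : list bool) (f : formula) : Prop := sat w (fun _ => 1%nat) f.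

Definition log2R (x : R) : R := ln x / ln 2.

(* Main.v *)
Require Import Defs.
From Stdlib Require Import Reals List Arith Lia Lra Classical FunctionalExtensionality.
Open Scope R_scope.

Inductive atom : Type :=
| ALt : nat -> nat -> atom
| AEq : nat -> nat -> atom
| AMin : nat -> atom
| AMax : nat -> atom
| ASb : nat -> atom.

Definition atom_eq_dec : forall a b : atom, {a = b} + {a <> b}.
Proof. decide equality; apply Nat.eq_dec. Defined.

Definition atom_f (a : atom) : formula :=
  match a with
  | ALt x y => FLt (TVar x) (TVar y)
  | AEq x y => FEq (TVar x) (TVar y)
  | AMin x => FEq (TVar x) TMin
  | AMax x => FEq (TVar x) TMax
  | ASb x => FS (TVar x)
  end.

Definition eval_atom (w : list bool) (v : nat -> nat) (a : atom) : bool :=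
  match a with
  | ALt x y => Nat.ltb (v x) (v y)
  | AEq x y => Nat.eqb (v x) (v y)
  | AMin x => Nat.eqb (v x) 1
  | AMax x => Nat.eqb (v x) (length w)
  | ASb x => nth (v x - 1) w false
  end.

Definition atom_var (z : nat) (a : atom) : Prop :=
  match a with
  | ALt x y | AEq x y => z = x \/ z = y
  | AMin x | AMax x | ASb x => z = x
  end.

Lemma atom_f_sat w v a : sat w v (atom_f a) <-> eval_atom w v a = true.
Proof.
  destruct a; simpl; unfold in_S; simpl.
  - rewrite Nat.ltb_lt; tauto.
  - rewrite Nat.eqb_eq; tauto.
  - rewrite Nat.eqb_eq; tauto.
  - rewrite Nat.eqb_eq; tauto.
  - tauto.
Qed.

Lemma atom_f_qc a : quant_count (atom_f a) = 0%nat.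
Proof. destruct a; reflexivity. Qed.

Lemma atom_f_free a x : occurs_free x (atom_f a) -> atom_var x a.
Proof. destruct a; simpl; unfold term_has_var; intuition. Qed.

Lemma generic (l : list atom) : forall (g : (atom -> bool) -> Prop),
  (forall f f', (forall a, In a l -> f a = f' a) -> (g f <-> g f')) ->
  exists F, quant_count F = 0%nat /\
    (forall x, occurs_free x F -> exists a, In a l /\ atom_var x a) /\
    forall w v, sat w v F <-> g (eval_atom w v).
Proof.
  induction l as [|a l IH]; intros g Hg.
  - destruct (classic (g (fun _ => false))) as [H|H].
    + exists FTrue; split; [reflexivity|split]; [simpl; tauto|].
      intros w v; simpl; split; intros _; [|exact I].
      apply (Hg (fun _ => false)); [intros a []|exact H].
    + exists FFalse; split; [reflexivity|split]; [simpl; tauto|].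
      intros w v; simpl; split; [intros []|].
      intros H'; apply H; apply (Hg (eval_atom w v)); [intros a []|exact H'].
  - set (g1 := fun f => g (fun b => if atom_eq_dec b a then true else f b)).
    set (g0 := fun f => g (fun b => if atom_eq_dec b a then false else f b)).
    assert (H1 : forall f f', (forall b, In b l -> f b = f' b) -> (g1 f <-> g1 f')).
    { intros f f' Hf; unfold g1; apply Hg; intros b Hb.
      destruct (atom_eq_dec b a); [reflexivity|]. destruct Hb; [congruence|auto]. }
    assert (H0 : forall f f', (forall b, In b l -> f b = f' b) -> (g0 f <-> g0 f')).
    { intros f f' Hf; unfold g0; apply Hg; intros b Hb.
      destruct (atom_eq_dec b a); [reflexivity|]. destruct Hb; [congruence|auto]. }
    destruct (IH g1 H1) as [F1 [q1 [fr1 s1]]].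
    destruct (IH g0 H0) as [F0 [q0 [fr0 s0]]].
    exists (FOr (FAnd (atom_f a) F1) (FAnd (FNot (atom_f a)) F0)).
    split; [simpl; rewrite atom_f_qc, q1, q0; reflexivity|split].
    + intros x Hx; simpl in Hx.
      destruct Hx as [[Hx|Hx]|[Hx|Hx]].
      * exists a; split; [left; auto|apply atom_f_free; auto].
      * destruct (fr1 x Hx) as [b [Hb Hb']]; exists b; split; [right|]; auto.
      * exists a; split; [left; auto|apply atom_f_free; auto].
      * destruct (fr0 x Hx) as [b [Hb Hb']]; exists b; split; [right|]; auto.
    + intros w v; simpl. rewrite atom_f_sat, s1, s0. unfold g1, g0.
      destruct (eval_atom w v a) eqn:E.
      * split.
        -- intros [[_ H]|[H _]]; [|congruence].
           revert H; apply Hg. intros b _; destruct (atom_eq_dec b a); subst; auto.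
        -- intros H; left; split; auto.
           apply (Hg (eval_atom w v)); [|exact H].
           intros b _; destruct (atom_eq_dec b a); subst; auto.
      * split.
        -- intros [[H _]|[_ H]]; [congruence|].
           revert H; apply Hg. intros b _; destruct (atom_eq_dec b a); subst; auto.
        -- intros H; right; split; [congruence|].
           apply (Hg (eval_atom w v)); [|exact H].
           intros b _; destruct (atom_eq_dec b a); subst; auto.
Qed.
Fixpoint exs_range (a k : nat) (F : formula) : formula :=
  match k with
  | O => F
  | S k' => FEx a (exs_range (S a) k' F)
  end.

Definition override (v : nat -> nat) (a k : nat) (g : nat -> nat) : nat -> nat :=
  fun x => if andb (Nat.leb a x) (Nat.ltb x (a + k)) then g x else v x.

Lemma exs_range_sat w k : forall a v F,
  sat w v (exs_range a k F) <->
  exists g, (forall x, (a <= x < a + k)%nat -> (1 <= g x <= length w)%nat) /\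
            sat w (override v a k g) F.
Proof.
  induction k as [|k IH]; intros a v F; simpl.
  - split.
    + intros H; exists (fun _ => 1%nat); split; [intros; lia|].
      replace (override v a 0 (fun _ => 1%nat)) with v; auto.
      apply functional_extensionality; intros x; unfold override.
      destruct (Nat.leb a x) eqn:E1, (Nat.ltb x (a+0)) eqn:E2; simpl; auto.
      apply Nat.leb_le in E1; apply Nat.ltb_lt in E2; lia.
    + intros [g [_ H]].
      replace v with (override v a 0 g); auto.
      apply functional_extensionality; intros x; unfold override.
      destruct (Nat.leb a x) eqn:E1, (Nat.ltb x (a+0)) eqn:E2; simpl; auto.
      apply Nat.leb_le in E1; apply Nat.ltb_lt in E2; lia.
  - split.
    + intros [val [Hval H]]. apply IH in H. destruct H as [g [Hg H]].
      exists (fun x => if Nat.eqb x a then val else g x). split.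
      * intros x Hx. destruct (Nat.eqb x a) eqn:E; auto.
        apply Nat.eqb_neq in E. apply Hg; lia.
      * replace (override v a (S k) (fun x => if Nat.eqb x a then val else g x))
          with (override (update v a val) (S a) k g); auto.
        apply functional_extensionality; intros x; unfold override, update.
        destruct (Nat.eqb x a) eqn:E0.
        -- apply Nat.eqb_eq in E0; subst x.
           destruct (Nat.leb (S a) a) eqn:E1; [apply Nat.leb_le in E1; lia|].
           destruct (Nat.leb a a) eqn:E2; [|apply Nat.leb_nle in E2; lia].
           destruct (Nat.ltb a (a + S k)) eqn:E3; [|apply Nat.ltb_nlt in E3; lia].
           reflexivity.
        -- apply Nat.eqb_neq in E0.
           destruct (Nat.leb (S a) x) eqn:E1, (Nat.ltb x (S a + k)) eqn:E2,
             (Nat.leb a x) eqn:E3, (Nat.ltb x (a + S k)) eqn:E4; simpl; auto;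
           repeat match goal with
           | H : Nat.leb _ _ = true |- _ => apply Nat.leb_le in H
           | H : Nat.leb _ _ = false |- _ => apply Nat.leb_nle in H
           | H : Nat.ltb _ _ = true |- _ => apply Nat.ltb_lt in H
           | H : Nat.ltb _ _ = false |- _ => apply Nat.ltb_nlt in H
           end; lia.
    + intros [g [Hg H]]. exists (g a). split; [apply Hg; lia|].
      apply IH. exists g. split; [intros x Hx; apply Hg; lia|].
      replace (override (update v a (g a)) (S a) k g) with (override v a (S k) g); auto.
      apply functional_extensionality; intros x; unfold override, update.
      destruct (Nat.eqb x a) eqn:E0.
      * apply Nat.eqb_eq in E0; subst x.
        destruct (Nat.leb (S a) a) eqn:E1; [apply Nat.leb_le in E1; lia|].
        destruct (Nat.leb a a) eqn:E2; [|apply Nat.leb_nle in E2; lia].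
        destruct (Nat.ltb a (a + S k)) eqn:E3; [|apply Nat.ltb_nlt in E3; lia].
        reflexivity.
      * apply Nat.eqb_neq in E0.
        destruct (Nat.leb (S a) x) eqn:E1, (Nat.ltb x (S a + k)) eqn:E2,
          (Nat.leb a x) eqn:E3, (Nat.ltb x (a + S k)) eqn:E4; simpl; auto;
        repeat match goal with
        | H : Nat.leb _ _ = true |- _ => apply Nat.leb_le in H
        | H : Nat.leb _ _ = false |- _ => apply Nat.leb_nle in H
        | H : Nat.ltb _ _ = true |- _ => apply Nat.ltb_lt in H
        | H : Nat.ltb _ _ = false |- _ => apply Nat.ltb_nlt in H
        end; lia.
Qed.

Lemma exs_range_qc a k F : quant_count (exs_range a k F) = (k + quant_count F)%nat.
Proof. revert a; induction k; intros a; simpl; auto. Qed.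

Lemma exs_range_free a k F x : occurs_free x (exs_range a k F) ->
  ~ (a <= x < a + k)%nat /\ occurs_free x F.
Proof.
  revert a; induction k as [|k IH]; intros a H; simpl in H.
  - split; auto; lia.
  - destruct H as [H1 H2]. apply IH in H2. destruct H2; split; auto; lia.
Qed.
Lemma lt_ceil i n s : (s <> 0)%nat -> ((i < (n + s - 1) / s)%nat <-> (i * s < n)%nat).
Proof.
  intros Hs; split; intros H.
  - assert (H1 := Nat.Div0.mul_div_le (n + s - 1) s).
    assert (s * (i+1) <= s * ((n + s - 1) / s))%nat by (apply Nat.mul_le_mono_l; lia).
    nia.
  - assert (S i <= (n + s - 1) / s)%nat; [|lia].
    apply Nat.div_le_lower_bound; [auto|nia].
Qed.

Fixpoint bits2nat (bs : list bool) : nat :=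
  match bs with
  | nil => 0%nat
  | b :: bs' => ((if b then 1 else 0) + 2 * bits2nat bs')%nat
  end.

Lemma bits2nat_lt bs : (bits2nat bs < 2 ^ length bs)%nat.
Proof.
  induction bs as [|b bs IH]; simpl; [lia|]. destruct b; lia.
Qed.

Lemma testbit_bits2nat bs : forall e, (e < length bs)%nat ->
  Nat.testbit (bits2nat bs) e = nth e bs false.
Proof.
  induction bs as [|b bs IH]; intros e He; simpl in *; [lia|].
  destruct e as [|e]; destruct b;
  match goal with |- Nat.testbit ?a _ = _ =>
    first [ replace a with (2 * bits2nat bs + 1)%nat by lia
          | replace a with (2 * bits2nat bs)%nat by lia ] end.
  - apply Nat.testbit_odd_0.
  - apply Nat.testbit_even_0.
  - rewrite Nat.testbit_odd_succ by lia. apply IH; lia.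
  - rewrite Nat.testbit_even_succ by lia. apply IH; lia.
Qed.

Lemma count_lt d r : length (filter (fun i => Nat.ltb i d) (seq 0 r)) = Nat.min d r.
Proof.
  induction r as [|r IH]; [simpl; lia|].
  rewrite seq_S, filter_app, length_app, IH. simpl.
  destruct (Nat.ltb r d) eqn:E; simpl.
  - apply Nat.ltb_lt in E; lia.
  - apply Nat.ltb_nlt in E; lia.
Qed.
Ltac bdes :=
  repeat match goal with
  | |- context [Nat.ltb ?a ?b] => destruct (Nat.ltb a b) eqn:?
  | |- context [Nat.leb ?a ?b] => destruct (Nat.leb a b) eqn:?
  | |- context [Nat.eqb ?a ?b] => destruct (Nat.eqb a b) eqn:?
  end;
  repeat match goal with
  | H : Nat.leb _ _ = true |- _ => apply Nat.leb_le in H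
  | H : Nat.leb _ _ = false |- _ => apply Nat.leb_nle in H
  | H : Nat.ltb _ _ = true |- _ => apply Nat.ltb_lt in H
  | H : Nat.ltb _ _ = false |- _ => apply Nat.ltb_nlt in H
  | H : Nat.eqb _ _ = true |- _ => apply Nat.eqb_eq in H
  | H : Nat.eqb _ _ = false |- _ => apply Nat.eqb_neq in H
  end.

Definition all_atoms (K : nat) : list atom :=
  flat_map (fun a => ASb a :: AMin a :: AMax a ::
     flat_map (fun b => ALt a b :: AEq a b :: nil) (seq 0 K)) (seq 0 K).

Lemma in_all_atoms_lt K a b : (a < K)%nat -> (b < K)%nat -> In (ALt a b) (all_atoms K).
Proof.
  intros Ha Hb; unfold all_atoms; apply in_flat_map; exists a; split; [apply in_seq; lia|].
  right; right; right; apply in_flat_map; exists b; split; [apply in_seq; lia|]. left; auto.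
Qed.
Lemma in_all_atoms_eq K a b : (a < K)%nat -> (b < K)%nat -> In (AEq a b) (all_atoms K).
Proof.
  intros Ha Hb; unfold all_atoms; apply in_flat_map; exists a; split; [apply in_seq; lia|].
  right; right; right; apply in_flat_map; exists b; split; [apply in_seq; lia|]. right; left; auto.
Qed.
Lemma in_all_atoms_1 K a : (a < K)%nat ->
  In (ASb a) (all_atoms K) /\ In (AMin a) (all_atoms K) /\ In (AMax a) (all_atoms K).
Proof.
  intros Ha; unfold all_atoms; repeat split; apply in_flat_map; exists a;
  (split; [apply in_seq; lia|]); simpl; auto.
Qed.
Lemma all_atoms_var K a x : In a (all_atoms K) -> atom_var x a -> (x < K)%nat.
Proof.
  unfold all_atoms; intros H Hx; apply in_flat_map in H; destruct H as [y [Hy H]].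
  apply in_seq in Hy. simpl in H.
  destruct H as [H|[H|[H|H]]]; try (subst; simpl in Hx; lia).
  apply in_flat_map in H; destruct H as [z [Hz H]]; apply in_seq in Hz.
  simpl in H; destruct H as [H|[H|[]]]; subst; simpl in Hx; lia.
Qed.

Section Constr.
Variables (n L s : nat) (A : list bool -> Prop).

Definition kr := (2 ^ L - 1)%nat.
Definition kt := ((n + L - 1) / L)%nat.
Definition km := ((n + s - 1) / s)%nat.
Definition kP := (kr + kt + km)%nat.
Definition kN := (kP + s + 2)%nat.
Definition Yv j := (kr + j)%nat.
Definition Bv i := (kr + kt + i)%nat.
Definition Cv l := (kP + 1 + l)%nat.
Definition YYv := (kP + 1 + s)%nat.
Definition blen i := Nat.min s (n - i * s).

Definition digit (lt : nat -> nat -> bool) j :=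
  length (filter (fun i => negb (lt (Yv j) i)) (seq 0 kr)).
Definition decs (lt : nat -> nat -> bool) :=
  map (fun p => Nat.testbit (digit lt (p / L)) (p mod L)) (seq 0 n).

Definition Pred0 (lt eq : nat -> nat -> bool) (sS mn mx : nat -> bool) : Prop :=
  A (decs lt) /\ mn (Bv 0) = true /\
  forall i, (i < km)%nat -> eq kP (Bv i) = true ->
   eq (Cv 0) kP = true /\
   (forall l, (l + 1 < blen i)%nat -> lt (Cv l) (Cv (l+1)) = true /\
        ~ (lt (Cv l) YYv = true /\ lt YYv (Cv (l+1)) = true)) /\
   ((i + 1 < km)%nat -> lt (Cv (blen i - 1)) (Bv (i+1)) = true /\
        ~ (lt (Cv (blen i - 1)) YYv = true /\ lt YYv (Bv (i+1)) = true)) /\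
   ((km <= i + 1)%nat -> mx (Cv (blen i - 1)) = true) /\
   (forall l, (l < blen i)%nat -> sS (Cv l) = nth (i * s + l) (decs lt) false).

Definition cl x := Nat.min x (kN - 1).

Definition gP (f : atom -> bool) : Prop :=
  Pred0 (fun x y => f (ALt (cl x) (cl y))) (fun x y => f (AEq (cl x) (cl y)))
        (fun x => f (ASb (cl x))) (fun x => f (AMin (cl x))) (fun x => f (AMax (cl x))).

Definition PredV (w : list bool) (V : nat -> nat) : Prop :=
  Pred0 (fun x y => Nat.ltb (V x) (V y)) (fun x y => Nat.eqb (V x) (V y))
        (fun x => nth (V x - 1) w false) (fun x => Nat.eqb (V x) 1)
        (fun x => Nat.eqb (V x) (length w)).

Lemma gP_eval w v : gP (eval_atom w v) = PredV w (fun x => v (cl x)).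
Proof. reflexivity. Qed.

Lemma cl_lt x : (cl x < kN)%nat.
Proof. unfold cl, kN; lia. Qed.

Lemma gP_dep f f' : (forall a, In a (all_atoms kN) -> f a = f' a) -> (gP f <-> gP f').
Proof.
  intros H. unfold gP.
  replace (fun x y => f (ALt (cl x) (cl y))) with (fun x y => f' (ALt (cl x) (cl y)))
    by (do 2 (apply functional_extensionality; intro); symmetry; apply H, in_all_atoms_lt; apply cl_lt).
  replace (fun x y => f (AEq (cl x) (cl y))) with (fun x y => f' (AEq (cl x) (cl y)))
    by (do 2 (apply functional_extensionality; intro); symmetry; apply H, in_all_atoms_eq; apply cl_lt).
  replace (fun x => f (ASb (cl x))) with (fun x => f' (ASb (cl x)))
    by (apply functional_extensionality; intro; symmetry; apply H, in_all_atoms_1, cl_lt).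
  replace (fun x => f (AMin (cl x))) with (fun x => f' (AMin (cl x)))
    by (apply functional_extensionality; intro; symmetry; apply H, in_all_atoms_1, cl_lt).
  replace (fun x => f (AMax (cl x))) with (fun x => f' (AMax (cl x)))
    by (apply functional_extensionality; intro; symmetry; apply H, in_all_atoms_1, cl_lt).
  tauto.
Qed.

Definition nu (g1 : nat -> nat) (u : nat) (g2 : nat -> nat) (y : nat) (x : nat) : nat :=
  if Nat.ltb x kP then g1 x else if Nat.eqb x kP then u
  else if Nat.ltb x (kP + 1 + s) then g2 x else if Nat.eqb x YYv then y else 1%nat.

Lemma nu_eq g1 u g2 y :
  update (override (update (override (fun _ => 1%nat) 0 kP g1) kP u) (kP + 1) s g2) YYv y
  = nu g1 u g2 y.
Proof.
  apply functional_extensionality; intros x.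
  unfold update, override, nu, YYv. bdes; simpl; try lia; try reflexivity.
Qed.

End Constr.
Section Sem.
Variables (n L s : nat) (A : list bool -> Prop).
Hypothesis HL : (1 <= L)%nat.
Hypothesis Hs : (1 <= s)%nat.
Hypothesis HLn : (2 ^ L <= n)%nat.

Notation KR := (kr L).
Notation KT := (kt n L).
Notation KM := (km n s).
Notation KP := (kP n L s).
Notation KN := (kN n L s).
Notation YV := (Yv L).
Notation BV := (Bv n L).
Notation CV := (Cv n L s).
Notation YY := (YYv n L s).
Notation BL := (blen n s).
Notation DEC := (decs n L).

Definition mu g1 u g2 y := fun x => nu n L s g1 u g2 y (cl n L s x).

Lemma cl_id x : (x < KN)%nat -> cl n L s x = x.
Proof. unfold cl; lia. Qed.

Lemma mu_pre g1 u g2 y x : (x < KP)%nat -> mu g1 u g2 y x = g1 x.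
Proof.
  intros H; unfold mu; rewrite cl_id by (unfold kN; lia). unfold nu. bdes; lia.
Qed.
Lemma mu_U g1 u g2 y : mu g1 u g2 y KP = u.
Proof.
  unfold mu; rewrite cl_id by (unfold kN; lia). unfold nu. bdes; lia.
Qed.
Lemma mu_C g1 u g2 y l : (l < s)%nat -> mu g1 u g2 y (CV l) = g2 (CV l).
Proof.
  intros H; unfold mu, Cv; rewrite cl_id by (unfold kN; lia). unfold nu. bdes; lia.
Qed.
Lemma mu_Y g1 u g2 y : mu g1 u g2 y YY = y.
Proof.
  unfold mu, YYv; rewrite cl_id by (unfold kN; lia). unfold nu, YYv. bdes; lia.
Qed.

Lemma L0 : L <> 0%nat. Proof. lia. Qed.
Lemma s0 : s <> 0%nat. Proof. lia. Qed.

Lemma div_lt_kt p : (p < n)%nat -> (p / L < KT)%nat.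
Proof.
  intros Hp. unfold kt. apply lt_ceil; [apply L0|].
  assert (H := Nat.Div0.mul_div_le p L). lia.
Qed.

Lemma div_lt_km p : (p < n)%nat -> (p / s < KM)%nat.
Proof.
  intros Hp. unfold km. apply lt_ceil; [apply s0|].
  assert (H := Nat.Div0.mul_div_le p s). lia.
Qed.

Lemma decs_ext lt1 lt2 :
  (forall j i, (j < KT)%nat -> (i < KR)%nat -> lt1 (YV j) i = lt2 (YV j) i) ->
  DEC lt1 = DEC lt2.
Proof.
  intros H. unfold decs. apply map_ext_in. intros p Hp. apply in_seq in Hp.
  unfold digit. f_equal. f_equal. apply filter_ext_in. intros i Hi. apply in_seq in Hi.
  rewrite H; auto; [apply div_lt_kt; lia|lia].
Qed.

Lemma decs_len lt : length (DEC lt) = n.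
Proof. unfold decs. rewrite length_map, length_seq. auto. Qed.

Ltac ulia := unfold Bv, Yv, Cv, YYv, kP, kN in *; lia.

Lemma blen_pos i : (i < KM)%nat -> (1 <= BL i <= s)%nat.
Proof. intros H. apply lt_ceil in H; [|apply s0]. unfold blen. lia. Qed.

Lemma blen_full i : (i + 1 < KM)%nat -> BL i = s.
Proof. intros H. apply lt_ceil in H; [|apply s0]. unfold blen. nia. Qed.

Lemma blen_last i : (i < KM)%nat -> (KM <= i + 1)%nat -> BL i = (n - i * s)%nat.
Proof.
  intros H H'. assert (~ (i + 1 < KM)%nat) by lia.
  unfold km in H0; rewrite lt_ceil in H0 by apply s0. unfold blen. nia.
Qed.

Lemma forward w g1 :
  length w = n ->
  (forall x, (x < KP)%nat -> (1 <= g1 x <= n)%nat) ->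
  (forall u, (1 <= u <= n)%nat -> exists g2,
      (forall x, (KP + 1 <= x < KP + 1 + s)%nat -> (1 <= g2 x <= n)%nat) /\
      forall y, (1 <= y <= n)%nat -> PredV n L s A w (mu g1 u g2 y)) ->
  A w.
Proof.
  intros Hw Hg1 Hall.
  set (D := DEC (fun x y => Nat.ltb (g1 x) (g1 y))).
  assert (HD : forall u g2 y,
    DEC (fun x y0 => Nat.ltb (mu g1 u g2 y x) (mu g1 u g2 y y0)) = D).
  { intros u g2 y. unfold D. apply decs_ext. intros j i Hj Hi.
    rewrite !mu_pre; auto; ulia. }
  assert (Hn : (1 <= n)%nat) by (pose proof (Nat.pow_nonzero 2 L ltac:(lia)); lia).
  assert (Hblock : forall i, (i < KM)%nat -> g1 (BV i) = (i * s + 1)%nat ->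
     ((i + 1 < KM)%nat -> g1 (BV (i+1)) = ((i+1) * s + 1)%nat) /\
     (forall l, (l < BL i)%nat -> nth (i * s + l) w false = nth (i * s + l) D false)).
  { intros i Hi Hb.
    assert (His : (i * s < n)%nat) by (apply lt_ceil; [apply s0|exact Hi]).
    destruct (Hall (i * s + 1)%nat ltac:(lia)) as [g2 [Hg2 Hy]].
    assert (HBL := blen_pos i Hi).
    assert (Hblk : forall y, (1 <= y <= n)%nat ->
      let V := mu g1 (i * s + 1) g2 y in
      Nat.eqb (V (CV 0)) (V KP) = true /\
      (forall l, (l + 1 < BL i)%nat -> Nat.ltb (V (CV l)) (V (CV (l+1))) = true /\
         ~ (Nat.ltb (V (CV l)) (V YY) = true /\ Nat.ltb (V YY) (V (CV (l+1))) = true)) /\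
      ((i + 1 < KM)%nat -> Nat.ltb (V (CV (BL i - 1))) (V (BV (i+1))) = true /\
         ~ (Nat.ltb (V (CV (BL i - 1))) (V YY) = true /\ Nat.ltb (V YY) (V (BV (i+1))) = true)) /\
      ((KM <= i + 1)%nat -> Nat.eqb (V (CV (BL i - 1))) (length w) = true) /\
      (forall l, (l < BL i)%nat -> nth (V (CV l) - 1) w false = nth (i * s + l) D false)).
    { intros y Hyr V. destruct (Hy y Hyr) as [_ [_ Hb']].
      rewrite <- (HD (i * s + 1)%nat g2 y).
      apply Hb'; [exact Hi|]. cbv beta. unfold V. rewrite mu_U, mu_pre by ulia.
      apply Nat.eqb_eq; auto. }
    assert (Hc0 : g2 (CV 0) = (i * s + 1)%nat).
    { destruct (Hblk 1%nat ltac:(lia)) as [H0 _]. cbv zeta in H0.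
      rewrite mu_C, mu_U in H0 by lia. apply Nat.eqb_eq in H0; auto. }
    assert (Hch : forall l, (l + 1 < BL i)%nat -> g2 (CV (l+1)) = (g2 (CV l) + 1)%nat).
    { intros l Hl.
      destruct (Hblk 1%nat ltac:(lia)) as [_ [H1 _]]. cbv zeta in H1.
      destruct (H1 l Hl) as [Hlt _]. rewrite !mu_C in Hlt by lia.
      apply Nat.ltb_lt in Hlt.
      assert (Hr := Hg2 (CV (l+1)) ltac:(ulia)).
      destruct (Hblk (g2 (CV l) + 1)%nat ltac:(lia)) as [_ [H2 _]]. cbv zeta in H2.
      destruct (H2 l Hl) as [_ Hno]. rewrite !mu_C, mu_Y in Hno by lia.
      destruct (Nat.eq_dec (g2 (CV (l+1))) (g2 (CV l) + 1)) as [E|E]; auto.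
      exfalso; apply Hno; split; apply Nat.ltb_lt; lia. }
    assert (Hcv : forall l, (l < BL i)%nat -> g2 (CV l) = (i * s + 1 + l)%nat).
    { induction l as [|l IH]; intros Hl.
      - rewrite Hc0; lia.
      - replace (S l) with (l + 1)%nat by lia. rewrite Hch by lia. rewrite IH by lia. lia. }
    split.
    - intros Hi1. assert (Hf := blen_full i Hi1).
      destruct (Hblk 1%nat ltac:(lia)) as [_ [_ [H1 _]]]. cbv zeta in H1.
      destruct (H1 Hi1) as [Hlt _]. rewrite mu_C, mu_pre in Hlt by ulia.
      apply Nat.ltb_lt in Hlt.
      assert (Hr := Hg1 (BV (i+1)) ltac:(ulia)).
      destruct (Hblk (g2 (CV (BL i - 1)) + 1)%nat) as [_ [_ [H2 _]]].
      { assert (1 <= g2 (CV (BL i - 1)))%nat by (apply Hg2; ulia). lia. }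
      cbv zeta in H2. destruct (H2 Hi1) as [_ Hno].
      rewrite mu_C, mu_Y, mu_pre in Hno by ulia.
      rewrite Hcv in Hlt, Hno by lia. rewrite Hf in *.
      destruct (Nat.eq_dec (g1 (BV (i+1))) (i * s + 1 + (s - 1) + 1)%nat) as [E|E].
      + rewrite E; lia.
      + exfalso; apply Hno; split; apply Nat.ltb_lt; lia.
    - intros l Hl. destruct (Hblk 1%nat ltac:(lia)) as [_ [_ [_ [_ H1]]]]. cbv zeta in H1.
      rewrite <- (H1 l Hl). rewrite mu_C by lia. rewrite Hcv by lia. f_equal; lia. }
  assert (Hbv : forall i, (i < KM)%nat -> g1 (BV i) = (i * s + 1)%nat).
  { induction i as [|i IH]; intros Hi.
    - destruct (Hall 1%nat ltac:(lia)) as [g2 [_ Hy]].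
      destruct (Hy 1%nat ltac:(lia)) as [_ [Hmn _]]. cbv beta in Hmn.
      rewrite mu_pre in Hmn by ulia. apply Nat.eqb_eq in Hmn. rewrite Hmn; lia.
    - replace (S i) with (i + 1)%nat by lia.
      apply (Hblock i); [lia| apply IH; lia | lia]. }
  assert (HwD : w = D).
  { apply nth_ext with (d := false) (d' := false).
    - unfold D; rewrite decs_len; auto.
    - intros p Hp. rewrite Hw in Hp.
      assert (Hi := div_lt_km p Hp).
      assert (Hdm := Nat.div_mod p s s0).
      assert (Hmd := Nat.mod_upper_bound p s s0).
      destruct (Hblock (p / s)%nat Hi (Hbv _ Hi)) as [_ Hbits].
      assert (Hl : (p mod s < BL (p / s))%nat) by (unfold blen; nia).
      specialize (Hbits _ Hl). replace (p / s * s + p mod s)%nat with p in Hbits by lia.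
      exact Hbits. }
  destruct (Hall 1%nat ltac:(lia)) as [g2 [_ Hy]].
  destruct (Hy 1%nat ltac:(lia)) as [HA _].
  rewrite HD in HA. rewrite HwD; exact HA.
Qed.
Lemma nth_map_seq {T} (f : nat -> T) k p d : (p < k)%nat -> nth p (map f (seq 0 k)) d = f p.
Proof.
  intros H. rewrite nth_indep with (d' := f 0%nat) by (rewrite length_map, length_seq; auto).
  rewrite map_nth, seq_nth by auto. reflexivity.
Qed.

Definition dv (w : list bool) j := bits2nat (map (fun e => nth (j * L + e) w false) (seq 0 L)).
Definition gA (w : list bool) x :=
  if Nat.ltb x KR then (x + 2)%nat
  else if Nat.ltb x (KR + KT) then (dv w (x - KR) + 1)%nat
  else ((x - KR - KT) * s + 1)%nat.
Definition gC u x := Nat.min (u + (x - (KP + 1))) n.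

Lemma KR_eq : (KR + 1 = 2 ^ L)%nat.
Proof. unfold kr. pose proof (Nat.pow_nonzero 2 L ltac:(lia)). lia. Qed.

Lemma dv_lt w j : (dv w j < 2 ^ L)%nat.
Proof.
  unfold dv. assert (H := bits2nat_lt (map (fun e => nth (j * L + e) w false) (seq 0 L))).
  rewrite length_map, length_seq in H. exact H.
Qed.

Lemma gA_A w i : (i < KR)%nat -> gA w i = (i + 2)%nat.
Proof. intros H; unfold gA; bdes; lia. Qed.
Lemma gA_Y w j : (j < KT)%nat -> gA w (YV j) = (dv w j + 1)%nat.
Proof. intros H; unfold gA, Yv; bdes; try lia. f_equal; f_equal; lia. Qed.
Lemma gA_B w i : gA w (BV i) = (i * s + 1)%nat.
Proof. intros; unfold gA, Bv; bdes; try lia. f_equal; f_equal; lia. Qed.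

Lemma gA_range w x : (x < KP)%nat -> (1 <= gA w x <= n)%nat.
Proof.
  intros Hx. pose proof KR_eq. unfold gA; bdes.
  - lia.
  - pose proof (dv_lt w (x - KR)). lia.
  - assert (Hi : (x - KR - KT < KM)%nat) by (unfold kP in Hx; lia).
    unfold km in Hi; rewrite lt_ceil in Hi by apply s0. remember ((x - KR - KT) * s)%nat as q; lia.
Qed.

Lemma decs_w w : length w = n -> DEC (fun x y => Nat.ltb (gA w x) (gA w y)) = w.
Proof.
  intros Hw. apply nth_ext with (d := false) (d' := false).
  - rewrite decs_len; auto.
  - intros p Hp. rewrite decs_len in Hp. unfold decs.
    rewrite nth_map_seq by auto.
    assert (Hj := div_lt_kt p Hp).
    assert (Hdig : digit L (fun x y => Nat.ltb (gA w x) (gA w y)) (p / L) = dv w (p / L)).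
    { unfold digit. rewrite filter_ext_in with (g := fun i => Nat.ltb i (dv w (p / L))).
      - rewrite count_lt. pose proof KR_eq. pose proof (dv_lt w (p / L)). lia.
      - intros i Hi. apply in_seq in Hi. rewrite gA_Y, gA_A by lia. bdes; lia. }
    rewrite Hdig. unfold dv at 1. rewrite testbit_bits2nat.
    2:{ rewrite length_map, length_seq. apply Nat.mod_upper_bound, L0. }
    rewrite nth_map_seq by (apply Nat.mod_upper_bound, L0).
    f_equal.
    pose proof (Nat.div_mod p L L0). lia.
Qed.

Lemma backward w : length w = n -> A w ->
  exists g1, (forall x, (x < KP)%nat -> (1 <= g1 x <= n)%nat) /\
  (forall u, (1 <= u <= n)%nat -> exists g2,
      (forall x, (KP + 1 <= x < KP + 1 + s)%nat -> (1 <= g2 x <= n)%nat) /\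
      forall y, (1 <= y <= n)%nat -> PredV n L s A w (mu g1 u g2 y)).
Proof.
  intros Hw HAw. exists (gA w). split; [apply gA_range|].
  intros u Hu. exists (gC u). split; [intros x Hx; unfold gC; lia|].
  intros y Hy. set (V := mu (gA w) u (gC u) y).
  assert (HVC : forall l, (l < s)%nat -> V (CV l) = Nat.min (u + l) n).
  { intros l Hl. unfold V. rewrite mu_C by auto. unfold gC, Cv. f_equal. lia. }
  assert (HD : DEC (fun x y0 => Nat.ltb (V x) (V y0)) = w).
  { transitivity (DEC (fun x y0 => Nat.ltb (gA w x) (gA w y0))); [|apply decs_w; auto].
    apply decs_ext. intros j i Hj Hi.
    unfold V; rewrite !mu_pre; auto; ulia. }
  assert (Hn : (1 <= n)%nat) by lia.
  assert (HKM : (0 < KM)%nat) by (unfold km; apply lt_ceil; [apply s0|lia]).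
  unfold PredV, Pred0. rewrite HD. split; [exact HAw|]. split.
  { unfold V; rewrite mu_pre by ulia. rewrite gA_B. apply Nat.eqb_eq; lia. }
  intros i Hi Heq. apply Nat.eqb_eq in Heq.
  unfold V in Heq. rewrite mu_U, mu_pre in Heq by ulia. rewrite gA_B in Heq. subst u.
  fold V.
  assert (His : (i * s < n)%nat) by (apply lt_ceil; [apply s0|exact Hi]).
  assert (HBL := blen_pos i Hi).
  assert (HBLn : (i * s + BL i <= n)%nat) by (unfold blen; lia).
  assert (HVU : V KP = (i * s + 1)%nat) by (unfold V; apply mu_U).
  assert (HVY : V YY = y) by (unfold V; apply mu_Y).
  split; [|split; [|split; [|split]]].
  - rewrite HVC, HVU by lia. apply Nat.eqb_eq; lia.
  - intros l Hl. rewrite !HVC by lia. rewrite HVY. split.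
    + apply Nat.ltb_lt; lia.
    + intros [H1 H2]; apply Nat.ltb_lt in H1; apply Nat.ltb_lt in H2; lia.
  - intros Hi1. assert (Hf := blen_full i Hi1).
    assert (HB1 : V (BV (i+1)) = ((i+1) * s + 1)%nat)
      by (unfold V; rewrite mu_pre by ulia; apply gA_B).
    assert (Hi1' : ((i + 1) * s < n)%nat) by (apply lt_ceil; [apply s0|exact Hi1]).
    rewrite HVC, HB1, HVY by lia. rewrite Hf in *. split.
    + apply Nat.ltb_lt; nia.
    + intros [H1 H2]; apply Nat.ltb_lt in H1; apply Nat.ltb_lt in H2; nia.
  - intros Hl. assert (Hb := blen_last i Hi Hl).
    rewrite HVC by lia. apply Nat.eqb_eq. lia.
  - intros l Hl. rewrite HVC by lia. f_equal. lia.
Qed.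
End Sem.
Definition phiF (n L s : nat) (F : formula) : formula :=
  exs_range 0 (kP n L s) (FAll (kP n L s) (exs_range (kP n L s + 1) s (FAll (YYv n L s) F))).

Lemma phi_sem n L s A F w :
  (forall w v, sat w v F <-> gP n L s A (eval_atom w v)) ->
  (holds w (phiF n L s F) <->
   exists g1, (forall x, (x < kP n L s)%nat -> (1 <= g1 x <= length w)%nat) /\
   (forall u, (1 <= u <= length w)%nat -> exists g2,
      (forall x, (kP n L s + 1 <= x < kP n L s + 1 + s)%nat -> (1 <= g2 x <= length w)%nat) /\
      forall y, (1 <= y <= length w)%nat -> PredV n L s A w (mu n L s g1 u g2 y))).
Proof.
  intros HF. unfold holds, phiF. rewrite exs_range_sat.
  split; intros [g1 [Hg1 H]]; exists g1; (split; [intros x Hx; apply Hg1; lia|]).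
  - intros u Hu. specialize (H u Hu). simpl in H. rewrite exs_range_sat in H.
    destruct H as [g2 [Hg2 H]]; exists g2; (split; [intros x Hx; apply Hg2; lia|]).
    intros y Hy; specialize (H y Hy). simpl in H.
    rewrite HF, nu_eq, gP_eval in H. exact H.
  - simpl. intros u Hu. specialize (H u Hu). rewrite exs_range_sat.
    destruct H as [g2 [Hg2 H]]; exists g2; (split; [intros x Hx; apply Hg2; lia|]).
    simpl. intros y Hy; specialize (H y Hy).
    rewrite HF, nu_eq, gP_eval. exact H.
Qed.

Lemma construct n L s (A : list bool -> Prop) : (1 <= L)%nat -> (1 <= s)%nat -> (2 ^ L <= n)%nat ->
  exists phi, sentence phi /\ quant_count phi = kN n L s /\
    forall w, length w = n -> (holds w phi <-> A w).
Proof.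
  intros HL Hs HLn.
  destruct (generic (all_atoms (kN n L s)) (gP n L s A) (gP_dep n L s A)) as [F [Fq [Ffr Fs]]].
  exists (phiF n L s F). split; [|split].
  - intros x Hx. unfold phiF in Hx.
    apply exs_range_free in Hx. destruct Hx as [Hx1 Hx]. simpl in Hx. destruct Hx as [Hx2 Hx].
    apply exs_range_free in Hx. destruct Hx as [Hx3 Hx]. simpl in Hx. destruct Hx as [Hx4 Hx].
    destruct (Ffr x Hx) as [a [Ha Hva]]. assert (H := all_atoms_var _ _ _ Ha Hva).
    unfold kN, YYv in *. lia.
  - unfold phiF. rewrite exs_range_qc. simpl. rewrite exs_range_qc. simpl. rewrite Fq. unfold kN. lia.
  - intros w Hw. rewrite (phi_sem n L s A F w Fs). rewrite Hw. split.
    + intros [g1 [Hg1 H]]. apply (forward n L s A HL Hs HLn w g1 Hw Hg1 H).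
    + intros HA. apply (backward n L s A HL Hs HLn w Hw HA).
Qed.
Lemma pow_sq k : (4 <= k)%nat -> (k * k <= 2 ^ k)%nat.
Proof.
  intros H. induction k as [|k IH]; [lia|].
  destruct (Nat.eq_dec k 3) as [E|E]; [subst; simpl; lia|].
  assert (IH' := IH ltac:(lia)). rewrite Nat.pow_succ_r'.
  assert (2 * k + 1 <= k * k)%nat by nia. nia.
Qed.

Lemma exp_beats K : exists k0, forall k, (k0 <= k)%nat -> (K * (k + 1) <= 2 ^ k)%nat.
Proof.
  exists (K + 4)%nat. intros k Hk. pose proof (pow_sq k ltac:(lia)).
  assert ((K + 1) * k <= k * k)%nat by (apply Nat.mul_le_mono_r; lia). nia.
Qed.

Lemma kt_bound n L : (1 <= L)%nat -> (kt n L * L <= n + L - 1)%nat.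
Proof.
  intros HL. unfold kt. pose proof (Nat.Div0.mul_div_le (n + L - 1) L). lia.
Qed.
Lemma quant_nat M k0 l n :
  (1 <= M)%nat ->
  (forall k, (k0 <= k)%nat -> (8 * (4 * M + 2) * M * (k + 1) <= 2 ^ k)%nat) ->
  (4 * M <= l)%nat -> ((4 * M + 2) * k0 <= l)%nat ->
  (2 ^ l <= n < 2 ^ S l)%nat ->
  (1 <= l - l / (4 * M + 2))%nat /\ (2 ^ (l - l / (4 * M + 2)) <= n)%nat /\ (1 <= 2 ^ (l / 2))%nat /\
  (2 * M * (l + 1) <= (2 * M + 1) * (l - l / (4 * M + 2)))%nat /\
  ((kr (l - l / (4 * M + 2)) + km n (2 ^ (l / 2)) + 2 ^ (l / 2)) * (2 * M * (l + 1)) <= n)%nat.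
Proof.
  intros HM Hk0 Hl1 Hl2 Hn.
  set (q := (4 * M + 2)%nat).
  assert (Hq : q <> 0%nat) by (unfold q; lia).
  set (k := (l / q)%nat).
  set (L := (l - k)%nat).
  set (h := (l / 2)%nat).
  set (s := (2 ^ h)%nat).
  assert (Hqk : (q * k <= l)%nat) by apply Nat.Div0.mul_div_le.
  assert (Hqk2 : (l < q * k + q)%nat).
  { pose proof (Nat.div_mod l q Hq). pose proof (Nat.mod_upper_bound l q Hq). fold k in H. lia. }
  assert (Hkk0 : (k0 <= k)%nat) by (apply Nat.div_le_lower_bound; [auto|exact Hl2]).
  assert (Hh : (2 * h <= l <= 2 * h + 1)%nat).
  { pose proof (Nat.div_mod l 2 ltac:(lia)). pose proof (Nat.mod_upper_bound l 2 ltac:(lia)). fold h in H. lia. }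
  assert (H2k : (2 * k <= q * k)%nat) by (apply Nat.mul_le_mono_r; unfold q; lia).
  assert (Hkh : (k <= h)%nat) by lia.
  assert (HL1 : (1 <= L)%nat) by (unfold L; lia).
  assert (Hs1 : (1 <= s)%nat) by (unfold s; pose proof (Nat.pow_nonzero 2 h ltac:(lia)); lia).
  set (E := (2 ^ L)%nat).
  assert (H2L : (E <= 2 ^ l)%nat) by (apply Nat.pow_le_mono_r; unfold L; lia).
  split; [auto|split; [lia|split; [auto|split]]].
  - assert (Hqk' : (q * k = 4 * (M * k) + 2 * k)%nat) by (unfold q; ring).
    assert (Hm1 : (2 * M * (l + 1) = 2 * (M * l) + 2 * M)%nat) by ring.
    assert (Hm2 : ((2 * M + 1) * L = 2 * (M * l) - 2 * (M * k) + L)%nat).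
    { unfold L. rewrite Nat.mul_sub_distr_l.
      assert (M * k <= M * l)%nat by (apply Nat.mul_le_mono_l; lia).
      assert ((2 * M + 1) * l = 2 * (M * l) + l)%nat by ring.
      assert ((2 * M + 1) * k = 2 * (M * k) + k)%nat by ring. lia. }
    rewrite Hm1, Hm2.
    assert (M * k <= M * l)%nat by (apply Nat.mul_le_mono_l; lia).
    unfold L. lia.
  - assert (HE : (2 ^ k * E = 2 ^ l)%nat).
    { unfold E. rewrite <- Nat.pow_add_r. f_equal. unfold L; lia. }
    assert (Hkr : (kr L + 1 = E)%nat) by (unfold kr, E; pose proof (Nat.pow_nonzero 2 L ltac:(lia)); lia).
    assert (HsE : (s <= E)%nat) by (unfold s, E; apply Nat.pow_le_mono_r; unfold L; lia).
    assert (Hkm : (km n s <= 2 * E)%nat).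
    { assert (Hd := Nat.Div0.mul_div_le (n + s - 1) s). fold (km n s) in Hd.
      assert (Hsp : (2 ^ S l = 2 ^ (S l - h) * s)%nat).
      { unfold s. rewrite <- Nat.pow_add_r. f_equal. lia. }
      assert (Hkm' : (km n s <= 2 ^ (S l - h))%nat).
      { destruct (Nat.le_gt_cases (km n s) (2 ^ (S l - h))) as [H|H]; auto.
        exfalso. assert (s * (2 ^ (S l - h) + 1) <= s * km n s)%nat by (apply Nat.mul_le_mono_l; lia).
        rewrite Nat.mul_add_distr_l, Nat.mul_1_r, Nat.mul_comm in H0. lia. }
      assert (2 ^ (S l - h) <= 2 ^ (S L))%nat by (apply Nat.pow_le_mono_r; unfold L; lia).
      rewrite Nat.pow_succ_r' in H. fold E in H. lia. }
    assert (Hb : (8 * q * M * (k + 1) <= 2 ^ k)%nat) by (apply Hk0; auto).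
    assert (Hsum : (kr L + km n s + s <= 4 * E)%nat) by lia.
    assert (H2 : (2 * M * (l + 1) <= 2 * M * (q * k + q))%nat) by (apply Nat.mul_le_mono_l; lia).
    assert (H3 : ((kr L + km n s + s) * (2 * M * (l + 1)) <= (4 * E) * (2 * M * (q * k + q)))%nat)
      by (apply Nat.mul_le_mono; auto).
    assert (H4 : ((4 * E) * (2 * M * (q * k + q)) = (8 * q * M * (k + 1)) * E)%nat) by ring.
    assert (H5 : ((8 * q * M * (k + 1)) * E <= 2 ^ k * E)%nat) by (apply Nat.mul_le_mono_r; auto).
    lia.
Qed.
Lemma div_aux1 a y z c : 0 < y -> 0 < z -> y <= c * z -> 0 <= a -> a / z <= c * (a / y).
Proof.
  intros Hy Hz Hyz Ha. apply Rmult_le_reg_r with (y * z); [apply Rmult_lt_0_compat; auto|].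
  replace (a / z * (y * z)) with (a * y) by (field; lra).
  replace (c * (a / y) * (y * z)) with (a * (c * z)) by (field; lra).
  apply Rmult_le_compat_l; auto.
Qed.

Lemma div_aux2 X a y K e : 0 < y -> 0 < K -> 0 <= X -> X * (K * y) <= a -> 1 <= K * e -> 0 < e ->
  X <= e * (a / y).
Proof.
  intros Hy HK HX H1 H2 He. apply Rmult_le_reg_r with y; auto.
  replace (e * (a / y) * y) with (e * a) by (field; lra).
  assert (e * (X * (K * y)) <= e * a) by (apply Rmult_le_compat_l; lra).
  assert (X * y <= X * y * (K * e)).
  { rewrite <- (Rmult_1_r (X * y)) at 1. apply Rmult_le_compat_l; auto.
    apply Rmult_le_pos; lra. }
  nra.
Qed.

Lemma div_aux3 a g l : 0 <= a -> 0 < g -> g <= l -> a / l <= a / g.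
Proof.
  intros Ha Hg Hgl. unfold Rdiv. apply Rmult_le_compat_l; auto.
  apply Rinv_le_contravar; auto.
Qed.

Lemma ln2_pos : 0 < ln 2.
Proof. rewrite <- ln_1. apply ln_increasing; lra. Qed.

Lemma log2R_pos n : (2 <= n)%nat -> 0 < log2R (INR n).
Proof.
  intros H. unfold log2R. apply Rdiv_lt_0_compat; [|apply ln2_pos].
  rewrite <- ln_1. apply ln_increasing; [lra|].
  apply le_INR in H. simpl in H. lra.
Qed.

Lemma log2R_le n l : (1 <= n)%nat -> (n < 2 ^ S l)%nat -> log2R (INR n) <= INR (l + 1).
Proof.
  intros H1 H2. unfold log2R.
  assert (Hl : ln (INR n) < ln (2 ^ S l)).
  { apply ln_increasing. apply lt_0_INR; lia.
    replace (2 ^ S l) with (INR (2 ^ S l)%nat) by (rewrite pow_INR; simpl; f_equal; lra).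
    apply lt_INR; auto. }
  rewrite ln_pow in Hl by lra.
  apply Rmult_le_reg_r with (ln 2); [apply ln2_pos|].
  replace (ln (INR n) / ln 2 * ln 2) with (ln (INR n)) by (field; pose proof ln2_pos; lra).
  replace (INR (l + 1)) with (INR (S l)) by (f_equal; lia). lra.
Qed.
Theorem mainTheorem19 :
  forall eps : R, 0 < eps ->
  exists C : R,
  forall (n : nat), (2 <= n)%nat ->
  forall A B : list bool -> Prop,
    (forall w, A w -> length w = n) ->
    (forall w, B w -> length w = n) ->
    (forall w, A w -> ~ B w) ->
    exists phi : formula,
      sentence phi /\
      INR (quant_count phi) <= (1 + eps) * (INR n / log2R (INR n)) + C /\
      (forall w, A w -> holds w phi) /\
      (forall w', B w' -> ~ holds w' phi).
Proof.
  intros eps Heps.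
  destruct (INR_unbounded (1 / eps)) as [M0 HM0].
  set (M := S M0).
  assert (HM1 : (1 <= M)%nat) by (unfold M; lia).
  assert (HMe : 1 <= INR M * eps).
  { assert (INR M0 <= INR M) by (apply le_INR; unfold M; lia).
    assert (1 / eps * eps = 1) by (field; lra).
    assert (1 / eps <= INR M) by lra.
    assert (1 / eps * eps <= INR M * eps) by (apply Rmult_le_compat_r; lra). lra. }
  destruct (exp_beats (8 * (4 * M + 2) * M)) as [k0 Hk0].
  set (l0 := (4 * M + (4 * M + 2) * k0)%nat).
  exists (INR (4 * 2 ^ S l0 + 3)).
  intros n Hn A B HA HB Hdisj.
  set (l := Nat.log2 n).
  assert (Hsp : (2 ^ l <= n < 2 ^ S l)%nat) by (apply Nat.log2_spec; lia).
  assert (Hl1 : (1 <= l)%nat).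
  { destruct (Nat.eq_dec l 0) as [E|E]; [|lia]. rewrite E in Hsp. simpl in Hsp. lia. }
  set (q := (4 * M + 2)%nat).
  set (L := (l - l / q)%nat).
  set (s := (2 ^ (l / 2))%nat).
  assert (Hq : q <> 0%nat) by (unfold q; lia).
  assert (HL1 : (1 <= L)%nat).
  { assert (q * (l / q) <= l)%nat by apply Nat.Div0.mul_div_le.
    assert (2 * (l / q) <= q * (l / q))%nat by (apply Nat.mul_le_mono_r; unfold q; lia).
    unfold L; lia. }
  assert (HLn : (2 ^ L <= n)%nat).
  { assert (2 ^ L <= 2 ^ l)%nat by (apply Nat.pow_le_mono_r; unfold L; lia). lia. }
  assert (Hs1 : (1 <= s)%nat) by (unfold s; pose proof (Nat.pow_nonzero 2 (l / 2) ltac:(lia)); lia).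
  destruct (construct n L s A HL1 Hs1 HLn) as [phi [Hsent [Hqc Hsem]]].
  exists phi. split; [exact Hsent|]. split.
  2:{ split.
      - intros w Hw. apply Hsem; auto.
      - intros w' Hw' Hh. apply Hsem in Hh; auto. apply (Hdisj w' Hh Hw'). }
  rewrite Hqc. unfold kN, kP.
  assert (Hg := log2R_pos n Hn).
  assert (Ha0 : 0 <= INR n) by apply pos_INR.
  assert (Hmain0 : 0 <= (1 + eps) * (INR n / log2R (INR n))).
  { apply Rmult_le_pos; [lra|]. unfold Rdiv; apply Rmult_le_pos; [lra|left; apply Rinv_0_lt_compat; lra]. }
  assert (Hkt := kt_bound n L HL1).
  destruct (Nat.lt_ge_cases l l0) as [Hsmall|Hlarge].
  -
    assert (Hkr : (kr L <= n)%nat) by (unfold kr; lia).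
    assert (Hkt' : (kt n L <= n)%nat).
    { destruct (Nat.le_gt_cases (kt n L) n) as [H|H]; auto.
      assert ((n + 1) * L <= kt n L * L)%nat by (apply Nat.mul_le_mono_r; lia).
      rewrite Nat.mul_add_distr_r, Nat.mul_1_l in H0.
      assert (n * 1 <= n * L)%nat by (apply Nat.mul_le_mono_l; lia). lia. }
    assert (Hkm : (km n s <= n)%nat).
    { assert (Hd := Nat.Div0.mul_div_le (n + s - 1) s). fold (km n s) in Hd.
      destruct (Nat.le_gt_cases (km n s) n) as [H|H]; auto.
      assert (s * (n + 1) <= s * km n s)%nat by (apply Nat.mul_le_mono_l; lia).
      assert (s * n + s <= s * km n s)%nat by (rewrite <- (Nat.mul_1_r s) at 2; rewrite <- Nat.mul_add_distr_l; auto).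
      assert (1 * n <= s * n)%nat by (apply Nat.mul_le_mono_r; lia). lia. }
    assert (Hss : (s <= n)%nat).
    { assert (s <= 2 ^ l)%nat by (unfold s; apply Nat.pow_le_mono_r; pose proof (Nat.div_mod l 2 ltac:(lia)); lia). lia. }
    assert (H2 : (2 ^ S l <= 2 ^ S l0)%nat) by (apply Nat.pow_le_mono_r; lia).
    assert (Hle : (kr L + kt n L + km n s + s + 2 <= 4 * 2 ^ S l0 + 3)%nat) by lia.
    apply le_INR in Hle. lra.
  -
    destruct (quant_nat M k0 l n HM1 Hk0 ltac:(unfold l0 in Hlarge; lia)
                ltac:(unfold l0 in Hlarge; lia) Hsp) as [_ [_ [_ [Hb Hcd]]]].
    fold q L s in Hb, Hcd.
    set (a := INR n). set (lp := INR (l + 1)). set (Lr := INR L).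
    assert (Hlp : 0 < lp) by (unfold lp; apply lt_0_INR; lia).
    assert (HLr : 0 < Lr) by (unfold Lr; apply lt_0_INR; lia).
    assert (HMr : 1 <= INR M) by (apply (le_INR 1); lia).
    assert (T1 : INR (kt n L) <= a / Lr + 1).
    { assert (INR (kt n L) * Lr <= a + Lr).
      { unfold Lr, a. rewrite <- mult_INR, <- plus_INR. apply le_INR. lia. }
      apply Rmult_le_reg_r with Lr; auto.
      replace ((a / Lr + 1) * Lr) with (a + Lr) by (field; lra). lra. }
    assert (T2 : a / Lr <= (1 + eps / 2) * (a / lp)).
    { apply div_aux1; auto.
      assert (Hb' : 2 * INR M * lp <= (2 * INR M + 1) * Lr).
      { replace (2 * INR M * lp) with (INR (2 * M * (l + 1))) by (unfold lp; rewrite !mult_INR; simpl; ring).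
        replace ((2 * INR M + 1) * Lr) with (INR ((2 * M + 1) * L))
          by (unfold Lr; rewrite mult_INR, plus_INR, mult_INR; simpl; ring).
        apply le_INR; exact Hb. }
      assert (lp <= (1 + 1 / (2 * INR M)) * Lr).
      { apply Rmult_le_reg_l with (2 * INR M); [lra|].
        replace (2 * INR M * ((1 + 1 / (2 * INR M)) * Lr)) with ((2 * INR M + 1) * Lr) by (field; lra).
        exact Hb'. }
      assert (1 / (2 * INR M) <= eps / 2).
      { apply Rmult_le_reg_l with (2 * INR M); [lra|].
        replace (2 * INR M * (1 / (2 * INR M))) with 1 by (field; lra). nra. }
      nra. }
    set (X := (kr L + km n s + s)%nat).
    assert (T3 : INR X <= eps / 2 * (a / lp)).
    { apply div_aux2 with (K := 2 * INR M); auto; try lra.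
      - apply pos_INR.
      - replace (INR X * (2 * INR M * lp)) with (INR (X * (2 * M * (l + 1))))
          by (unfold lp; rewrite !mult_INR; simpl; ring).
        apply le_INR. unfold X. exact Hcd. }
    assert (T4 : a / lp <= a / log2R a).
    { apply div_aux3; auto. apply log2R_le; lia. }
    assert (HC : 3 <= INR (4 * 2 ^ S l0 + 3)).
    { rewrite plus_INR. pose proof (pos_INR (4 * 2 ^ S l0)). simpl (INR 3). lra. }
    replace (INR (kr L + kt n L + km n s + s + 2)) with (INR (kt n L) + INR X + 2)
      by (unfold X; rewrite !plus_INR; simpl; ring).
    assert (0 <= a / lp) by (unfold Rdiv; apply Rmult_le_pos; [unfold a; apply pos_INR|left; apply Rinv_0_lt_compat; lra]).
    fold a. nra.
Qed.
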